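(* Let $k$ be a positive integer. Among all real numbers $1\ge a_1\ge\dots\ge a_k\ge0$ with $\sum_{i=1}^k a_i=1$, the value of \[\frac{1}{\prod_{i=1}^k(1-a_i)^{1-a_i}\,a_i^{2a_i}}\] (with the convention $0^0=1$) is maximized when $a_i=\frac1k$ for all $i$. *)

(* Defs.v *)
From Stdlib Require Import Reals Lra Lia.
Open Scope R_scope.

Definition rpow0 (b e : R) : R :=
  if Req_EM_T b 0 then (if Req_EM_T e 0 then 1 else 0) else Rpower b e.

Fixpoint prodR (k : nat) (f : nat -> R) : R :=
  match k with
  | O => 1
  | S n => prodR n f * f n
  end.

Fixpoint sumR (k : nat) (f : nat -> R) : R :=
  match k with
  | O => 0
  | S n => sumR n f + f n
  end.

Definition Phi (k : nat) (a : nat -> R) : R :=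
  / prodR k (fun i => rpow0 (1 - a i) (1 - a i) * rpow0 (a i) (2 * a i)).

(* Main.v *)
Require Import Defs.
From Stdlib Require Import Reals Lra Lia.
Open Scope R_scope.

Lemma key_ineq (u v : R) : 0 <= u -> 0 < v -> 0 <= u * ln u - u * ln v - u + v.
Proof.
  intros Hu Hv. destruct (Req_dec u 0) as [->|Hu0]; [lra|].
  assert (Hup : 0 < u) by lra.
  pose proof (exp_ineq1_le (ln v - ln u)) as H.
  assert (E : exp (ln v - ln u) = v * / u).
  { unfold Rminus. rewrite exp_plus, exp_Ropp, !exp_ln; auto. }
  rewrite E in H.
  apply (Rmult_le_compat_l u) in H; [|lra].
  replace (u * (v * / u)) with v in H by (field; lra).
  nra.
Qed.

Definition F (x : R) := (1 - x) * ln (1 - x) + 2 * x * ln x.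

Lemma tangent (x c : R) : 0 <= x <= 1 -> 0 < c < 1 ->
  F c + (- ln (1 - c) + 1 + 2 * ln c) * (x - c) <= F x.
Proof.
  intros Hx Hc. unfold F.
  pose proof (key_ineq (1 - x) (1 - c) ltac:(lra) ltac:(lra)).
  pose proof (key_ineq x c ltac:(lra) ltac:(lra)).
  nra.
Qed.

Lemma rpow0_self b : rpow0 b b = exp (b * ln b).
Proof.
  unfold rpow0. destruct (Req_EM_T b 0) as [->|]; [|reflexivity].
  destruct (Req_EM_T 0 0); [|congruence]. rewrite Rmult_0_l, exp_0; auto.
Qed.

Lemma rpow0_2 b : rpow0 b (2 * b) = exp (2 * b * ln b).
Proof.
  unfold rpow0. destruct (Req_EM_T b 0) as [->|]; [|reflexivity].
  destruct (Req_EM_T (2*0) 0); [|lra]. rewrite !Rmult_0_r, Rmult_0_l, exp_0; auto.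
Qed.

Lemma prod_exp k g : prodR k (fun i => exp (g i)) = exp (sumR k g).
Proof. induction k; simpl. now rewrite exp_0. rewrite IHk, exp_plus; auto. Qed.

Lemma prodR_ext k f g : (forall i, f i = g i) -> prodR k f = prodR k g.
Proof. intros H; induction k; simpl; congruence. Qed.

Lemma sumR_le k f g : (forall i, (i < k)%nat -> f i <= g i) -> sumR k f <= sumR k g.
Proof. intros H; induction k; simpl. lra.
  assert (sumR k f <= sumR k g) by (apply IHk; intros; apply H; lia).
  specialize (H k ltac:(lia)). lra. Qed.

Lemma sumR_lin k A B f : sumR k (fun i => A + B * (f i)) = INR k * A + B * sumR k f.
Proof. induction k; simpl sumR. simpl; ring. rewrite IHk, S_INR; ring. Qed.

Lemma sumR_ext k f g : (forall i, f i = g i) -> sumR k f = sumR k g.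
Proof. intros H; induction k; simpl; congruence. Qed.

Lemma sumR_const k A : sumR k (fun _ => A) = INR k * A.
Proof. induction k; simpl sumR. simpl; ring. rewrite IHk, S_INR; ring. Qed.

Lemma Phi_eq k a : Phi k a = / exp (sumR k (fun i => F (a i))).
Proof.
  unfold Phi. f_equal. rewrite <- prod_exp. apply prodR_ext. intros i.
  rewrite rpow0_self, rpow0_2, <- exp_plus. reflexivity.
Qed.

Lemma mono (k : nat) (a : nat -> R) :
  (forall i, (S i < k)%nat -> a i >= a (S i)) ->
  forall j i, (i + j < k)%nat -> a (i + j)%nat <= a i.
Proof.
  intros H; induction j; intros i Hi. rewrite Nat.add_0_r; lra.
  replace (i + S j)%nat with (S (i + j)) by lia.
  specialize (H (i + j)%nat ltac:(lia)). specialize (IHj i ltac:(lia)). lra.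
Qed.

Theorem lemma3p12 (k : nat) (hk : (1 <= k)%nat) (a : nat -> R) :
  (1 >= a 0%nat) ->
  (forall i, (S i < k)%nat -> a i >= a (S i)) ->
  (a (Nat.pred k) >= 0) ->
  sumR k a = 1 ->
  Phi k a <= Phi k (fun _ => / INR k).
Proof.
  intros H0 Hm Hl Hs.
  assert (Hb : forall i, (i < k)%nat -> 0 <= a i <= 1).
  { intros i Hi. split.
    - pose proof (mono k a Hm (Nat.pred k - i) i ltac:(lia)) as X.
      replace (i + (Nat.pred k - i))%nat with (Nat.pred k) in X by lia. lra.
    - pose proof (mono k a Hm i 0 ltac:(lia)) as X. simpl in X. lra. }
  rewrite !Phi_eq. apply Rinv_le_contravar; [apply exp_pos|].
  destruct (Req_dec (sumR k (fun _ => F (/ INR k))) (sumR k (fun i => F (a i)))) as [E|NE].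
  { rewrite E; lra. }
  left. apply exp_increasing.
  destruct (Nat.eq_dec k 1) as [->|Hk1].
  { exfalso. apply NE. simpl in Hs |- *. replace (a 0%nat) with (/ 1) by (rewrite Rinv_1; lra). reflexivity. }
  assert (Hk : 2 <= INR k) by (replace 2 with (INR 2) by (simpl; lra); apply le_INR; lia).
  set (c := / INR k).
  assert (Hc : 0 < c < 1).
  { unfold c; split. apply Rinv_0_lt_compat; lra.
    rewrite <- Rinv_1. apply Rinv_lt_contravar; lra. }
  set (D := - ln (1 - c) + 1 + 2 * ln c).
  assert (Hle : sumR k (fun i => F c + D * (a i - c)) <= sumR k (fun i => F (a i))).
  { apply sumR_le. intros i Hi. apply tangent; auto. }
  assert (Hlin : sumR k (fun i => F c + D * (a i - c)) = sumR k (fun _ => F c)).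
  { rewrite (sumR_ext k _ (fun i => (F c - D * c) + D * a i)) by (intros; ring).
    rewrite sumR_lin, sumR_const, Hs.
    assert (Hkc : INR k * c = 1) by (unfold c; field; lra).
    replace (INR k * (F c - D * c) + D * 1) with (INR k * F c - D * (INR k * c) + D) by ring.
    rewrite Hkc; ring. }
  rewrite Hlin in Hle. destruct Hle as [Hlt|Heq]; [exact Hlt| contradiction].
Qed.
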